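(* Let $\epsilon>0$, let $f(\cdot)$ be any function, and let $\mathcal{I}$ be a bin packing input made up solely of large items (items of size at least $\epsilon$). Then any packing of $\mathcal{I}$ into unit bins using at most $(1+\epsilon)\cdot OPT(\mathcal{I})+f(\epsilon^{-1})$ bins has all but at most $2\epsilon\cdot OPT(\mathcal{I})+2f(\epsilon^{-1})+3$ of its bins either containing no large items or being more than half filled by large items (i.e., the total size of large items in the bin exceeds $1/2$).
   Context: $OPT(\mathcal{I})$ denotes the minimum number of unit-capacity bins into which the items of $\mathcal{I}$ can be packed. *)

(* Defs.v *)
From HB Require Import structures.
From mathcomp Require Import all_boot all_order all_algebra.
Set Implicit Arguments. Unset Strict Implicit. Unset Printing Implicit Defensive.
Import Order.TTheory GRing.Theory Num.Theory.
Local Open Scope ring_scope.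

(* A bin packing input: n items with sizes s : 'I_n -> R, each in (0,1].
   A packing into m bins is an assignment a : 'I_n -> 'I_m of items to bins. *)

Definition load (R : realFieldType) (n m : nat) (s : 'I_n -> R) (a : 'I_n -> 'I_m)
  (j : 'I_m) : R := \sum_(i < n | a i == j) s i.

Definition large_load (R : realFieldType) (n m : nat) (eps : R) (s : 'I_n -> R)
  (a : 'I_n -> 'I_m) (j : 'I_m) : R := \sum_(i < n | (a i == j) && (eps <= s i)) s i.

Definition valid_packing (R : realFieldType) (n m : nat) (s : 'I_n -> R)
  (a : 'I_n -> 'I_m) : Prop := forall j : 'I_m, load s a j <= 1.

Definition packable (R : realFieldType) (n : nat) (s : 'I_n -> R) (m : nat) : Prop :=
  exists a : 'I_n -> 'I_m, valid_packing s a.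

Definition is_OPT (R : realFieldType) (n : nat) (s : 'I_n -> R) (opt : nat) : Prop :=
  packable s opt /\ forall m, packable s m -> (opt <= m)%N.

Definition used_bins (n m : nat) (a : 'I_n -> 'I_m) : {set 'I_m} :=
  [set j | [exists i, a i == j]].

(* Main.v *)
Require Import Defs.
From HB Require Import structures.
From mathcomp Require Import all_boot all_order all_algebra.
From mathcomp Require Import zify lra.
Set Implicit Arguments. Unset Strict Implicit. Unset Printing Implicit Defensive.
Import Order.TTheory GRing.Theory Num.Theory.
Local Open Scope ring_scope.

Lemma compact (R : realFieldType) n m (s : 'I_n -> R) (a : 'I_n -> 'I_m) :
  valid_packing s a -> packable s #|used_bins a|.
Proof.
move=> Hv.
case: n s a Hv => [|n] s a Hv.
  have f0 : 'I_0 -> 'I_#|used_bins a| by case.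
  exists f0.
  by move=> j; rewrite /load big_ord0.
have Hin : forall i, a i \in used_bins a.
  by move=> i; rewrite inE; apply/existsP; exists i.
pose a' := fun i => enum_rank_in (Hin ord0) (a i).
exists a' => k.
rewrite /load.
have -> : \sum_(i < n.+1 | a' i == k) s i = \sum_(i < n.+1 | a i == enum_val k) s i.
  apply: eq_bigl => i; rewrite /a'; apply/eqP/eqP => [<-|->].
    by rewrite enum_rankK_in.
  by rewrite enum_valK_in.
exact: Hv.
Qed.

Lemma packable_mono (R : realFieldType) n (s : 'I_n -> R) k k' :
  (k <= k')%N -> packable s k -> packable s k'.
Proof.
move=> Hk [a Ha]; exists (fun i => widen_ord Hk (a i)) => j.
case: (ltnP j k) => Hj.
  have -> : j = widen_ord Hk (Ordinal Hj) by apply: val_inj.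
  rewrite /load; have -> : \sum_(i < n | widen_ord Hk (a i) == widen_ord Hk (Ordinal Hj)) s i = \sum_(i < n | a i == Ordinal Hj) s i.
    by apply: eq_bigl => i; rewrite -val_eqE.
  exact: Ha.
rewrite /load big_pred0 ?ler01 // => i.
apply/negbTE/eqP => E; move: Hj; rewrite -E /= leqNgt ltn_ord //.
Qed.
Lemma merge (R : realFieldType) n m (s : 'I_n -> R) k : forall (a : 'I_n -> 'I_m) (B : {set 'I_m}),
  (#|B| <= k)%N -> valid_packing s a -> B \subset used_bins a ->
  (forall j, j \in B -> load s a j <= 1/2) ->
  exists a' : 'I_n -> 'I_m, valid_packing s a' /\ (#|used_bins a'| + #|B|./2 <= #|used_bins a|)%N.
Proof.
elim: k => [|k IH] a B Hk Hv HB Hl.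
  by exists a; split => //; move: Hk; rewrite leqn0 => /eqP ->; rewrite addn0.
case: (leqP #|B| 1) => HB1.
  by exists a; split => //; move: HB1; case: #|B| => [|[|]] //= _; rewrite addn0.
have [x Hx] : exists x, x \in B by apply/set0Pn; rewrite -card_gt0; lia.
have [y Hy] : exists y, y \in B :\ x by apply/set0Pn; rewrite -card_gt0 (cardsD1 x B) Hx in HB1 *; lia.
move: (Hy); rewrite !inE => /andP [Hyx HyB].
pose a' := fun i => if a i == y then x else a i.
have Hsub : forall j, j != x -> j != y -> forall i, (a' i == j) = (a i == j).
  move=> j Hjx Hjy i; rewrite /a'; case: (eqVneq (a i) y) => [->|Hne].
    by rewrite eq_sym (negbTE Hjx) eq_sym (negbTE Hjy).
  by [].
have Hv' : valid_packing s a'.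
  move=> j; case: (eqVneq j x) => [->|Hjx].
    rewrite /load (bigID (fun i => a i == x)) /=.
    have -> : \sum_(i < n | (a' i == x) && (a i == x)) s i = load s a x.
      apply: eq_bigl => i; rewrite /a'; case: (eqVneq (a i) y) => [->|Hne].
        by rewrite eqxx (negbTE Hyx) andbF.
      by rewrite andbb.
    have -> : \sum_(i < n | (a' i == x) && ~~ (a i == x)) s i = load s a y.
      apply: eq_bigl => i; rewrite /a'; case: (eqVneq (a i) y) => [->|Hne].
        by rewrite eqxx Hyx.
      by rewrite andbN.
    have := Hl x Hx; have := Hl y HyB; lra.
  case: (eqVneq j y) => [->|Hjy].
    rewrite /load big_pred0 ?ler01 // => i; rewrite /a'.
    case: (eqVneq (a i) y) => [_|Hne]; first by rewrite eq_sym (negbTE Hyx).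
    exact: negbTE.
  rewrite /load; under eq_bigl => i do rewrite (Hsub j Hjx Hjy i).
  exact: Hv.
have HxU : x \in used_bins a by apply: (subsetP HB).
have HyU : y \in used_bins a by apply: (subsetP HB).
have HU : used_bins a' \subset used_bins a :\ y.
  apply/subsetP => j; rewrite !inE => /existsP [i /eqP <-].
  rewrite /a'; case: (eqVneq (a i) y) => [_|Hne].
    by move: HxU; rewrite inE eq_sym Hyx.
  by rewrite Hne; apply/existsP; exists i.
have cU := subset_leq_card HU.
have cU2 := cardsD1 y (used_bins a); rewrite HyU in cU2.
pose B' := B :\ x :\ y.
have cB : #|B| = (#|B'|).+2.
  by rewrite (cardsD1 x B) Hx (cardsD1 y (B :\ x)) Hy.
have [a'' [Hv'' Hc'']] : exists a'' : 'I_n -> 'I_m, valid_packing s a'' /\ (#|used_bins a''| + #|B'|./2 <= #|used_bins a'|)%N.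
  apply: IH => //.
  - lia.
  - apply/subsetP => j; rewrite !inE => /andP [Hjy /andP [Hjx HjB]].
    have := subsetP HB j HjB; rewrite !inE => /existsP [i Hi].
    by apply/existsP; exists i; rewrite (Hsub j Hjx Hjy i).
  - move=> j; rewrite !inE => /andP [Hjy /andP [Hjx HjB]].
    rewrite /load; under eq_bigl => i do rewrite (Hsub j Hjx Hjy i).
    exact: Hl.
exists a''; split => //.
rewrite cB /=; rewrite /= in cU2.
by rewrite cU2 addnS add1n ltnS; exact: leq_trans Hc'' cU.
Qed.
Theorem mainTheorem4 (R : realFieldType) (eps : R) (f : R -> R)
    (n : nat) (s : 'I_n -> R) (opt : nat) (m : nat) (a : 'I_n -> 'I_m) :
  0 < eps ->
  (forall i, 0 < s i <= 1) ->
  (forall i, eps <= s i) ->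
  is_OPT s opt ->
  valid_packing s a ->
  (#|used_bins a|%:R <= (1 + eps) * opt%:R + f eps^-1) ->
  #|[set j : 'I_m | [exists i, (a i == j) && (eps <= s i)] &&
                    ~~ (large_load eps s a j > 1 / 2)]|%:R
    <= 2 * eps * opt%:R + 2 * f eps^-1 + 3.
Proof.
move=> Heps Hs Hl [_ Hopt] Hv Hu.
set S := [set j : 'I_m | _].
have HS : S \subset used_bins a.
  apply/subsetP => j; rewrite !inE => /andP [/existsP [i /andP [Hi _]] _].
  by apply/existsP; exists i.
have HL : forall j, j \in S -> load s a j <= 1/2.
  move=> j; rewrite inE => /andP [_ H]; rewrite leNgt.
  suff -> : load s a j = large_load eps s a j by [].
  by apply: eq_bigl => i; rewrite Hl andbT.
have [a'' [Hv'' Hc]] := merge (leqnn #|S|) Hv HS HL.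
have Ho := Hopt _ (compact Hv'').
have H1 : (opt + #|S|./2 <= #|used_bins a|)%N by apply: leq_trans Hc; rewrite leq_add2r.
have H2 : (#|S| <= (#|S|./2).*2 + 1)%N.
  by rewrite -{1}(odd_double_half #|S|) addnC leq_add2l; case: odd.
have R1 : opt%:R + (#|S|./2)%:R <= #|used_bins a|%:R :> R by rewrite -natrD ler_nat.
have R2 : #|S|%:R <= 2 * (#|S|./2)%:R + 1 :> R.
  by move: H2; rewrite -(ler_nat R) natrD -mul2n natrM => H; lra.
lra.
Qed.
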